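(* Let $U\subset\mathbb{R}^k$ be open and let $(\mathcal{D}_x)_{x\in U}$ be a modulated Dirac structure with $\mathcal{D}_x\subset\mathbb{R}^n\times\mathbb{R}^n$ for all $x\in U$. Let $E:U\to\mathbb{R}^{\ell\times n}$ be continuous and assume that the dimension of the space $\mathcal{D}_x\cap(\mathbb{R}^n\times\ker E(x))$ is independent of $x\in U$. For $x\in U$ define $\widetilde{\mathcal{D}}_x:=\{(f,e)\in\mathbb{R}^n\times\mathbb{R}^n:\ E(x)e=0,\ \exists\,\mu\in\mathbb{R}^\ell:\ (f+E(x)^\top\mu,e)\in\mathcal{D}_x\}$. Then $(\widetilde{\mathcal{D}}_x)_{x\in U}$ is a modulated Dirac structure.
   Context: A subspace $\mathcal{D}\subset\mathbb{R}^n\times\mathbb{R}^n$ is a Dirac structure if for all $f,e\in\mathbb{R}^n$: $(f,e)\in\mathcal{D}$ if and only if $\hat f^\top e+f^\top\hat e=0$ for all $(\hat f,\hat e)\in\mathcal{D}$. For $U\subset\mathbb{R}^k$ open, a family $(\mathcal{D}_x)_{x\in U}$ of subspaces of $\mathbb{R}^n\times\mathbb{R}^n$ is a modulated Dirac structure if for every $x\in U$: (a) $\mathcal{D}_x$ is a Dirac structure, and (b) there exist a neighborhood $U_x\subset U$ of $x$ and a family $(T_y)_{y\in U_x}$ of linear bijective maps $T_y:\mathbb{R}^n\to\mathcal{D}_y$ such that for every $z\in\mathbb{R}^n$ the map $y\mapsto T_yz$ from $U_x$ to $\mathbb{R}^n\times\mathbb{R}^n$ is continuous. *)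

(* Defs.v *)
From HB Require Import structures.
From mathcomp Require Import all_boot all_order all_algebra.
From mathcomp Require Import all_classical all_reals all_analysis.
Set Implicit Arguments. Unset Strict Implicit. Unset Printing Implicit Defensive.
Import Order.TTheory GRing.Theory Num.Theory.
Import numFieldNormedType.Exports.
Local Open Scope classical_set_scope.
Local Open Scope ring_scope.

Definition dot (R : realType) (n : nat) (u v : 'rV[R]_n) : R := (u *m v^T) 0 0.

Definition is_subspace (R : realType) (n : nat) (S : set ('rV[R]_n * 'rV[R]_n)) :=
  S (0, 0) /\
  (forall p q, S p -> S q -> S (p.1 + q.1, p.2 + q.2)) /\
  (forall (a : R) p, S p -> S (a *: p.1, a *: p.2)).

Definition dirac (R : realType) (n : nat) (D : set ('rV[R]_n * 'rV[R]_n)) :=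
  is_subspace D /\
  forall f e, D (f, e) <->
    (forall f' e', D (f', e') -> dot f' e + dot f e' = 0).

Definition lin_bij_onto (R : realType) (m n : nat)
    (L : 'rV[R]_m -> 'rV[R]_n * 'rV[R]_n) (S : set ('rV[R]_n * 'rV[R]_n)) :=
  (forall (a : R) (z w : 'rV[R]_m),
      L (a *: z + w) = ((a *: (L z).1 + (L w).1), (a *: (L z).2 + (L w).2))) /\
  injective L /\
  (forall p, S p <-> exists z, L z = p).

Definition has_dim (R : realType) (n : nat) (S : set ('rV[R]_n * 'rV[R]_n)) (d : nat) :=
  is_subspace S /\ exists L : 'rV[R]_d -> 'rV[R]_n * 'rV[R]_n, lin_bij_onto L S.

Definition modulated_dirac (R : realType) (k n : nat) (U : set 'rV[R]_k)
    (D : 'rV[R]_k -> set ('rV[R]_n * 'rV[R]_n)) :=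
  forall x, U x ->
    dirac (D x) /\
    exists Ux : set 'rV[R]_k, [/\ nbhs x Ux, Ux `<=` U &
      exists T : 'rV[R]_k -> 'rV[R]_n -> 'rV[R]_n * 'rV[R]_n,
        (forall y, Ux y -> lin_bij_onto (T y) (D y)) /\
        (forall z : 'rV[R]_n, {within Ux, continuous (fun y => T y z)})].

Definition in_kerE (R : realType) (l n : nat) (E : 'M[R]_(l, n)) (e : 'rV[R]_n) :=
  E *m e^T = 0.

Definition reduced_dirac (R : realType) (k l n : nat)
    (D : 'rV[R]_k -> set ('rV[R]_n * 'rV[R]_n)) (E : 'rV[R]_k -> 'M[R]_(l, n))
    (x : 'rV[R]_k) : set ('rV[R]_n * 'rV[R]_n) :=
  fun p => in_kerE (E x) p.2 /\ exists mu : 'rV[R]_l, D x (p.1 + mu *m E x, p.2).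

(* Main.v *)
Require Import Defs.
From HB Require Import structures.
From mathcomp Require Import all_boot all_order all_algebra.
From mathcomp Require Import all_classical all_reals all_analysis.
From mathcomp Require Import zify.
Set Implicit Arguments. Unset Strict Implicit. Unset Printing Implicit Defensive.
Import Order.TTheory GRing.Theory Num.Theory.
Import numFieldNormedType.Exports.
Local Open Scope classical_set_scope.
Local Open Scope ring_scope.
Section Alg.
Variable R : realType.
Implicit Types (n m l : nat).

Lemma dotC n (u v : 'rV[R]_n) : dot u v = dot v u.
Proof.
rewrite /dot; have -> : (u *m v^T) 0 0 = (u *m v^T)^T 0 0 by rewrite [RHS]mxE.
by rewrite trmx_mul trmxK.
Qed.

Lemma dot_delta m (v : 'rV[R]_m) (i : 'I_m) : (v *m (delta_mx (0 : 'I_1) i)^T) 0 0 = v 0 i.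
Proof. by rewrite trmx_delta -colE mxE. Qed.

Lemma rv_eq0 m (v : 'rV[R]_m) : (forall i, v 0 i = 0) -> v = 0.
Proof. by move=> H; apply/rowP => i; rewrite mxE H. Qed.

Definition rep1 m n (L : 'rV[R]_m -> 'rV[R]_n * 'rV[R]_n) : 'M[R]_(m,n) :=
  \matrix_(i < m) (L (delta_mx 0 i)).1.
Definition rep2 m n (L : 'rV[R]_m -> 'rV[R]_n * 'rV[R]_n) : 'M[R]_(m,n) :=
  \matrix_(i < m) (L (delta_mx 0 i)).2.

Definition linL m n (L : 'rV[R]_m -> 'rV[R]_n * 'rV[R]_n) :=
  forall (a : R) (z w : 'rV[R]_m),
      L (a *: z + w) = ((a *: (L z).1 + (L w).1), (a *: (L z).2 + (L w).2)).

Lemma lin_rep m n (L : 'rV[R]_m -> 'rV[R]_n * 'rV[R]_n) : linL L ->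
  forall z, L z = (z *m rep1 L, z *m rep2 L).
Proof.
move=> HL.
have LS : forall (s : seq 'I_m) (c : 'I_m -> R),
  L (\sum_(i <- s) c i *: delta_mx 0 i) =
  (\sum_(i <- s) c i *: (L (delta_mx 0 i)).1, \sum_(i <- s) c i *: (L (delta_mx 0 i)).2).
  move=> s c; elim: s => [|i s IH].
    rewrite !big_nil; move: (HL 1 0 0); rewrite scale1r addr0 !scale1r.
    case: (L 0) => a b /= [ha hb].
    have dbl : forall x : 'rV[R]_n, x = x + x -> x = 0.
      by move=> x hx; have := congr1 (fun t => t - x) hx; rewrite /= addrK subrr.
    by rewrite [a]dbl // [b]dbl.
  by rewrite !big_cons HL IH.
move=> z; rewrite {1}(row_sum_delta z) LS; congr pair; rewrite mulmx_sum_row;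
  by apply: eq_bigr => i _; rewrite rowK.
Qed.


Lemma rank_swap m n (M1 M2 : 'M[R]_(m,n)) :
  \rank (row_mx M2 M1) = \rank (row_mx M1 M2).
Proof.
by rewrite -mxrank_tr tr_row_mx -[in RHS]mxrank_tr tr_row_mx -!addsmxE addsmxC.
Qed.

Lemma iso_rank m n (M1 M2 : 'M[R]_(m,n)) :
  M1 *m M2^T + M2 *m M1^T = 0 -> (\rank (row_mx M1 M2) <= n)%N.
Proof.
move=> iso.
have : (row_mx M1 M2 <= kermx (row_mx M2 M1)^T)%MS.
  by apply/sub_kermxP; rewrite tr_row_mx mul_row_col.
move/mxrankS; rewrite mxrank_ker mxrank_tr rank_swap.
have := rank_leq_col (row_mx M1 M2); lia.
Qed.

Lemma lagr_rank m n (M1 M2 : 'M[R]_(m,n)) :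
  M1 *m M2^T + M2 *m M1^T = 0 ->
  (forall f e : 'rV[R]_n, f *m M2^T + e *m M1^T = 0 ->
     exists w : 'rV[R]_m, f = w *m M1 /\ e = w *m M2) ->
  \rank (row_mx M1 M2) = n.
Proof.
move=> iso Hmax.
have : (kermx (row_mx M2 M1)^T <= row_mx M1 M2)%MS.
  apply/row_subP => i.
  have uY : row i (kermx (row_mx M2 M1)^T) *m (row_mx M2 M1)^T = 0.
    by rewrite -row_mul mulmx_ker row0.
  move: uY; rewrite -[row i _]hsubmxK tr_row_mx mul_row_col => /Hmax [w [h1 h2]].
  by rewrite h1 h2 -mul_mx_row submxMl.
move/mxrankS; rewrite mxrank_ker mxrank_tr rank_swap.
have := iso_rank iso; lia.
Qed.


Lemma minor m p (M : 'M[R]_(m,p)) k : \rank M = k ->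
  exists (f : 'I_k -> 'I_m) (g : 'I_k -> 'I_p), \det (mxsub f g M) != 0.
Proof.
move=> <-; set f := maxrankfun M; have fr := maxrowsub_free M.
have ff : row_full (rowsub f M)^T by rewrite /row_full mxrank_tr.
exists f, (fullrankfun ff); rewrite -unitfE -unitmxE.
have -> : mxsub f (fullrankfun ff) M = (rowsub (fullrankfun ff) (rowsub f M)^T)^T.
  by apply/matrixP => i j; rewrite !mxE.
by rewrite unitmx_tr fullrowsub_unit.
Qed.

Lemma colsub_mul1 m p k (g : 'I_k -> 'I_p) (X : 'M[R]_(m,p)) :
  colsub g X = X *m colsub g 1%:M.
Proof. by rewrite mulmx_colsub mulmx1. Qed.

Lemma minor_free m p k (f : 'I_k -> 'I_m) (g : 'I_k -> 'I_p) (M : 'M[R]_(m,p)) :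
  \det (mxsub f g M) != 0 -> row_free (rowsub f M).
Proof.
rewrite -unitfE -unitmxE => /mxrank_unit rk.
have : (\rank (mxsub f g M) <= \rank (rowsub f M))%N.
  have -> : mxsub f g M = colsub g (rowsub f M) by apply/matrixP => i j; rewrite !mxE.
  by rewrite colsub_mul1 mxrankM_maxl.
by rewrite rk /row_free => h; rewrite eqn_leq h rank_leq_row.
Qed.

Section Zsec.
Variables (n l r : nat) (N : 'M[R]_(n,l)) (f : 'I_r -> 'I_n) (g : 'I_r -> 'I_l).
Let A := mxsub f g N.
Definition Zmx := \det A *: 1%:M - colsub g N *m \adj A *m rowsub f 1%:M.

Lemma Zspan p (X : 'M[R]_(p,n)) : \det A != 0 -> X *m N = 0 ->
  X = ((\det A)^-1 *: X) *m Zmx.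
Proof.
move=> dA XN; rewrite /Zmx mulmxBr -!scalemxAl !mulmxA mulmx_colsub XN.
have -> : colsub g (0 : 'M[R]_(p,l)) = 0 by apply/matrixP => i j; rewrite !mxE.
by rewrite !mul0mx scaler0 subr0 -scalemxAr mulmx1 scalerA mulVf // scale1r.
Qed.

Lemma ZN : \det A != 0 -> (\rank N <= r)%N -> Zmx *m N = 0.
Proof.
move=> dA rN.
have fr := minor_free dA.
have s1 : (rowsub f N <= N)%MS by rewrite rowsubE submxMl.
have : (N <= rowsub f N)%MS.
  rewrite -(mxrank_leqif_sup s1).2 eqn_leq mxrankS //=.
  by move/eqP: fr => ->.
case/submxP => C hC.
have hA : colsub g N = C *m A.
  rewrite {1}hC -mulmx_colsub; congr (_ *m _).
  by apply/matrixP => i j; rewrite !mxE.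
rewrite /Zmx mulmxBl hA -!mulmxA (mulmxA A) mul_mx_adj -rowsubE mul_scalar_mx -scalemxAl -scalemxAr -hC.
by rewrite mul1mx subrr.
Qed.
End Zsec.

Lemma dotM m p q (v : 'rV[R]_m) (w : 'rV[R]_p) (X : 'M[R]_(m,q)) (Y : 'M[R]_(p,q)) :
  dot (v *m X) (w *m Y) = (v *m (X *m Y^T) *m w^T) 0 0.
Proof. by rewrite /dot trmx_mul !mulmxA. Qed.

Lemma dirac_iso n (Dset : set ('rV[R]_n * 'rV[R]_n)) (F G : 'M[R]_n) :
  (forall p, Dset p <-> exists z, p = (z *m F, z *m G)) -> Defs.dirac Dset ->
  F *m G^T + G *m F^T = 0.
Proof.
move=> HD [_ Hd]; apply/matrixP => i j; rewrite !mxE.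
have Dj : Dset (delta_mx 0 j *m F, delta_mx 0 j *m G) by apply/HD; eexists.
have Di : Dset (delta_mx 0 i *m F, delta_mx 0 i *m G) by apply/HD; eexists.
have := (Hd _ _).1 Dj _ _ Di.
rewrite dotM [dot (_ *m F) _]dotC dotM -!rowE !dot_delta !mxE.
by [].
Qed.

Section Red.
Variables (n l : nat) (Dset : set ('rV[R]_n * 'rV[R]_n)) (F G : 'M[R]_n)
  (Em : 'M[R]_(l,n)) (Z : 'M[R]_n).
Hypothesis HD : forall p, Dset p <-> exists z, p = (z *m F, z *m G).
Hypothesis Hdir : Defs.dirac Dset.
Hypothesis HZN : Z *m (G *m Em^T) = 0.
Hypothesis HZs : forall p (X : 'M[R]_(p,n)), X *m (G *m Em^T) = 0 -> exists W, X = W *m Z.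

Definition Dt : set ('rV[R]_n * 'rV[R]_n) :=
  fun p => in_kerE Em p.2 /\ exists mu : 'rV[R]_l, Dset (p.1 + mu *m Em, p.2).
Definition Bf : 'M[R]_(n + l, n) := col_mx (Z *m F) Em.
Definition Be : 'M[R]_(n + l, n) := col_mx (Z *m G) 0.

Lemma kerT p (X : 'M[R]_(p,n)) : Em *m (X *m G)^T = (X *m (G *m Em^T))^T.
Proof. by rewrite mulmxA [RHS]trmx_mul trmxK. Qed.

Lemma Dt_row (w : 'rV[R]_(n + l)) : Dt (w *m Bf, w *m Be).
Proof.
rewrite -[w]hsubmxK /Bf /Be !mul_row_col mulmx0 addr0; split => /=.
  by rewrite /in_kerE mulmxA kerT -mulmxA HZN mulmx0 trmx0.
exists (- rsubmx w); apply/HD; exists (lsubmx w *m Z).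
by rewrite mulNmx addrK !mulmxA.
Qed.

Lemma Dt_span p : Dt p -> exists w : 'rV[R]_(n + l), p = (w *m Bf, w *m Be).
Proof.
case: p => f e [/= ke [mu /HD [z [hf he]]]].
have zN : z *m (G *m Em^T) = 0.
  by rewrite mulmxA -he; apply: trmx_inj; rewrite trmx_mul trmxK ke trmx0.
have [W hW] := HZs zN.
exists (row_mx W (- mu)); rewrite /Bf /Be !mul_row_col mulmx0 addr0 !mulmxA -hW.
by rewrite -hf mulNmx addrK he.
Qed.

Lemma B_iso : Bf *m Be^T + Be *m Bf^T = 0.
Proof.
rewrite /Bf /Be !tr_col_mx !mul_col_row add_block_mx trmx0 !mulmx0 !mul0mx.
have e1 : Z *m F *m (Z *m G)^T + Z *m G *m (Z *m F)^T = 0.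
  have isoFG := dirac_iso HD Hdir.
  by rewrite !trmx_mul !mulmxA -!(mulmxA Z) -mulmxDr -mulmxDl isoFG mul0mx mulmx0.
have e2 : Em *m (Z *m G)^T = 0 by rewrite kerT HZN trmx0.
by rewrite e1 e2 !add0r -mulmxA HZN block_mx0.
Qed.

Lemma Dt_max (f e : 'rV[R]_n) : f *m Be^T + e *m Bf^T = 0 -> Dt (f, e).
Proof.
rewrite /Bf /Be !tr_col_mx !mul_mx_row add_row_mx -row_mx0.
move=> /eq_row_mx [h1]; rewrite trmx0 mulmx0 add0r => h2.
have ke : in_kerE Em e by rewrite /in_kerE -[Em]trmxK -trmx_mul h2 trmx0.
set N := G *m Em^T.
set w := f *m G^T + e *m F^T.
have hw : w *m Z^T = 0 by rewrite /w mulmxDl -!mulmxA -!trmx_mul.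
set K := (cokermx N^T)^T.
have KN : K *m N = 0.
  by rewrite /K -[N in _ *m N]trmxK -trmx_mul mulmx_coker trmx0.
have [W hW] := HZs KN.
have : (w <= N^T)%MS.
  by rewrite submxE -[cokermx _]trmxK -/K hW trmx_mul mulmxA hw mul0mx.
case/submxP => mu' hmu.
split => //; exists (- mu'); apply/(Hdir.2 _ _) => f' e' /HD [z [-> ->]].
have key : (f + - mu' *m Em) *m G^T + e *m F^T = 0.
  rewrite mulmxDl addrAC -/w hmu mulNmx mulNmx /N trmx_mul trmxK mulmxA.
  by rewrite subrr.
have -> : dot (z *m F) e + dot (f + - mu' *m Em) (z *m G) =
  (((f + - mu' *m Em) *m G^T + e *m F^T) *m z^T) 0 0.
  rewrite [dot (_ *m F) _]dotC /dot !trmx_mul !mulmxA mulmxDl [in RHS]mxE.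
  by rewrite addrC.
by rewrite key mul0mx mxE.
Qed.

Lemma Dt_eq p : Dt p <-> exists w : 'rV[R]_(n + l), p = (w *m Bf, w *m Be).
Proof. by split; [exact: Dt_span | case=> w ->; exact: Dt_row]. Qed.

Lemma Dt_dirac : Defs.dirac Dt.
Proof.
split.
  split; first by have := Dt_row 0; rewrite !mul0mx.
  split.
    move=> p q /Dt_eq [w ->] /Dt_eq [v ->] /=.
    by rewrite -!mulmxDl; exact: Dt_row.
  by move=> a p /Dt_eq [w ->] /=; rewrite !scalemxAl; exact: Dt_row.
move=> f e; split.
  move=> /Dt_eq [w [-> ->]] f' e' /Dt_eq [v [-> ->]].
  rewrite dotM [dot (w *m Bf) _]dotC dotM.
  have -> : forall A B : 'M[R]_1, A 0 0 + B 0 0 = (A + B) 0 0 by move=> *; rewrite mxE.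
  by rewrite -mulmxDl -mulmxDr B_iso mulmx0 mul0mx mxE.
move=> H; apply: Dt_max; apply: rv_eq0 => i.
have := H _ _ (Dt_row (delta_mx 0 i)).
rewrite [dot (_ *m Bf) _]dotC /dot !trmx_mul !mulmxA !dot_delta.
by move=> h; rewrite [X in X = 0]mxE addrC.
Qed.

Lemma B_rank : \rank (row_mx Bf Be) = n.
Proof.
apply: lagr_rank; first exact: B_iso.
by move=> f e /Dt_max /Dt_span [w [-> ->]]; exists w.
Qed.

End Red.

Lemma dim_rank n l d (F G : 'M[R]_n) (Em : 'M[R]_(l,n)) (S : set ('rV[R]_n * 'rV[R]_n)) :
  (forall z z' : 'rV[R]_n, (z *m F, z *m G) = (z' *m F, z' *m G) -> z = z') ->
  (forall p, S p <-> exists z : 'rV[R]_n, p = (z *m F, z *m G) /\ z *m (G *m Em^T) = 0) ->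
  has_dim S d -> \rank (G *m Em^T) = (n - d)%N.
Proof.
move=> inj HS [_ [L [linL' [injL ontoL]]]].
set N := G *m Em^T.
have hex : forall i : 'I_d, exists z,
    L (delta_mx 0 i) = (z *m F, z *m G) /\ z *m N = 0.
  move=> i; have : S (L (delta_mx 0 i)) by apply/ontoL; eexists.
  by move/HS.
have [phi hphi] := choice hex.
set Phi := \matrix_(i < d) phi i.
have LPhi : forall u, L u = (u *m Phi *m F, u *m Phi *m G).
  move=> u; rewrite (lin_rep linL' u); congr pair; rewrite -mulmxA; congr (_ *m _);
  by apply/row_matrixP => i; rewrite row_mul !rowK (hphi i).1.
have PhiN : Phi *m N = 0.
  by apply/row_matrixP => i; rewrite row_mul rowK row0 (hphi i).2.
have fr : row_free Phi.
  rewrite -kermx_eq0; apply/eqP/row_matrixP => i; rewrite row0.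
  have uP : row i (kermx Phi) *m Phi = 0 by rewrite -row_mul mulmx_ker row0.
  apply: injL; rewrite !LPhi uP mul0mx !mul0mx.
  by [].
have s1 : (Phi <= kermx N)%MS by apply/sub_kermxP.
have s2 : (kermx N <= Phi)%MS.
  apply/row_subP => i.
  have uN : row i (kermx N) *m N = 0 by rewrite -row_mul mulmx_ker row0.
  have : S (row i (kermx N) *m F, row i (kermx N) *m G) by apply/HS; eexists.
  case/ontoL => v; rewrite LPhi => /inj <-.
  exact: submxMl.
have := mxrankS s1; have := mxrankS s2; rewrite mxrank_ker.
move/eqP: fr => ->; have := rank_leq_row N; lia.
Qed.

Lemma sel_bij n m (S : set ('rV[R]_n * 'rV[R]_n)) (Bf Be : 'M[R]_(m,n))
  (h : 'I_n -> 'I_m) (c : 'I_n -> 'I_(n + n)) :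
  (forall p, S p <-> exists w : 'rV[R]_m, p = (w *m Bf, w *m Be)) ->
  Bf *m Be^T + Be *m Bf^T = 0 ->
  \det (mxsub h c (row_mx Bf Be)) != 0 ->
  lin_bij_onto (fun z : 'rV[R]_n => (z *m rowsub h Bf, z *m rowsub h Be)) S.
Proof.
move=> HS iso hdet.
have fr := minor_free hdet.
have rs : rowsub h (row_mx Bf Be) = row_mx (rowsub h Bf) (rowsub h Be).
  by rewrite rowsubE mul_mx_row -!rowsubE.
have s1 : (rowsub h (row_mx Bf Be) <= row_mx Bf Be)%MS by rewrite rowsubE submxMl.
have s2 : (row_mx Bf Be <= rowsub h (row_mx Bf Be))%MS.
  rewrite -(mxrank_leqif_sup s1).2 eqn_leq mxrankS //=.
  by move/eqP: fr => ->; exact: iso_rank.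
split; first by move=> a z w; rewrite !mulmxDl !scalemxAl.
split.
  move=> z1 z2 [e1 e2]; apply: (row_free_inj fr).
  by rewrite rs !mul_mx_row e1 e2.
move=> p; split.
  case/HS => w ->.
  have : (w *m row_mx Bf Be <= rowsub h (row_mx Bf Be))%MS.
    exact: submx_trans (submxMl _ _) s2.
  case/submxP => z; rewrite rs !mul_mx_row => /eq_row_mx [e1 e2].
  by exists z; rewrite e1 e2.
case=> z <-; apply/HS; exists (z *m rowsub h 1%:M).
by rewrite -!mulmxA -!rowsubE.
Qed.

End Alg.
Section Cont.
Variables (R : realType) (k : nat) (x : 'rV[R]_k).
#[local] Instance FFx : Filter (nbhs x) := nbhs_filter x.
Definition cts (g : 'rV[R]_k -> R) := g y @[y --> x] --> g x.
Definition ctm p q (A : 'rV[R]_k -> 'M[R]_(p,q)) := forall i j, cts (fun y => A y i j).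

Lemma cts_ext f g : (forall y, f y = g y) -> cts g -> cts f.
Proof. by move=> e; have -> : f = g by apply/funext. Qed.

Lemma cts_cst c : cts (fun=> c).
Proof. exact: cvg_cst. Qed.

Lemma cts_add f g : cts f -> cts g -> cts (fun y => f y + g y).
Proof. by move=> hf hg; apply: cvgD. Qed.

Lemma cts_mul f g : cts f -> cts g -> cts (fun y => f y * g y).
Proof. by move=> hf hg; apply: cvgM. Qed.

Lemma cts_opp f : cts f -> cts (fun y => - f y).
Proof. by move=> hf; apply: cvgN. Qed.

Lemma cts_sum (I : Type) (r : seq I) (P : pred I) (g : I -> 'rV[R]_k -> R) :
  (forall i, cts (g i)) -> cts (fun y => \sum_(i <- r | P i) g i y).
Proof. move=> H; apply: cvg_big => //; [exact: add_continuous | move=> i _; exact: H]. Qed.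

Lemma cts_prod (I : Type) (r : seq I) (P : pred I) (g : I -> 'rV[R]_k -> R) :
  (forall i, cts (g i)) -> cts (fun y => \prod_(i <- r | P i) g i y).
Proof. move=> H; apply: cvg_big => //; [exact: mul_continuous | move=> i _; exact: H]. Qed.

Lemma ctm_cst p q (M : 'M[R]_(p,q)) : ctm (fun=> M).
Proof. by move=> i j; exact: cts_cst. Qed.

Lemma ctm_add p q (A B : 'rV[R]_k -> 'M[R]_(p,q)) : ctm A -> ctm B -> ctm (fun y => A y + B y).
Proof.
move=> hA hB i j; apply: (cts_ext (g := fun y => A y i j + B y i j)) => [y|]; first by rewrite mxE.
exact: cts_add.
Qed.

Lemma ctm_opp p q (A : 'rV[R]_k -> 'M[R]_(p,q)) : ctm A -> ctm (fun y => - A y).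
Proof.
move=> hA i j; apply: (cts_ext (g := fun y => - A y i j)) => [y|]; first by rewrite mxE.
exact: cts_opp.
Qed.

Lemma ctm_scale p q (c : 'rV[R]_k -> R) (A : 'rV[R]_k -> 'M[R]_(p,q)) :
  cts c -> ctm A -> ctm (fun y => c y *: A y).
Proof.
move=> hc hA i j; apply: (cts_ext (g := fun y => c y * A y i j)) => [y|]; first by rewrite mxE.
exact: cts_mul.
Qed.

Lemma ctm_mul p q s (A : 'rV[R]_k -> 'M[R]_(p,q)) (B : 'rV[R]_k -> 'M[R]_(q,s)) :
  ctm A -> ctm B -> ctm (fun y => A y *m B y).
Proof.
move=> hA hB i j; apply: (cts_ext (g := fun y => \sum_l A y i l * B y l j)) => [y|]; first by rewrite mxE.
by apply: cts_sum => l; apply: cts_mul.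
Qed.

Lemma ctm_tr p q (A : 'rV[R]_k -> 'M[R]_(p,q)) : ctm A -> ctm (fun y => (A y)^T).
Proof.
move=> hA i j; apply: (cts_ext (g := fun y => A y j i)) => [y|]; first by rewrite mxE.
exact: hA.
Qed.

Lemma ctm_mxsub p q p' q' (f : 'I_p' -> 'I_p) (g : 'I_q' -> 'I_q) (A : 'rV[R]_k -> 'M[R]_(p,q)) :
  ctm A -> ctm (fun y => mxsub f g (A y)).
Proof.
move=> hA i j; apply: (cts_ext (g := fun y => A y (f i) (g j))) => [y|]; first by rewrite mxE.
exact: hA.
Qed.

Lemma ctm_col_mx p1 p2 q (A : 'rV[R]_k -> 'M[R]_(p1,q)) (B : 'rV[R]_k -> 'M[R]_(p2,q)) :
  ctm A -> ctm B -> ctm (fun y => col_mx (A y) (B y)).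
Proof.
move=> hA hB i j; rewrite -[i](@fintype.splitK p1 p2); case: (fintype.split i) => i' /=.
  by apply: (cts_ext (g := fun y => A y i' j)) => [y|]; [rewrite col_mxEu | exact: hA].
by apply: (cts_ext (g := fun y => B y i' j)) => [y|]; [rewrite col_mxEd | exact: hB].
Qed.

Lemma ctm_row_mx p q1 q2 (A : 'rV[R]_k -> 'M[R]_(p,q1)) (B : 'rV[R]_k -> 'M[R]_(p,q2)) :
  ctm A -> ctm B -> ctm (fun y => row_mx (A y) (B y)).
Proof.
move=> hA hB i j; rewrite -[j](@fintype.splitK q1 q2); case: (fintype.split j) => j' /=.
  by apply: (cts_ext (g := fun y => A y i j')) => [y|]; [rewrite row_mxEl | exact: hA].
by apply: (cts_ext (g := fun y => B y i j')) => [y|]; [rewrite row_mxEr | exact: hB].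
Qed.

Lemma cts_det p (A : 'rV[R]_k -> 'M[R]_p) : ctm A -> cts (fun y => \det (A y)).
Proof.
move=> hA; apply: cts_sum => s; apply: cts_mul; first exact: cts_cst.
by apply: cts_prod => i; exact: hA.
Qed.

Lemma ctm_adj p (A : 'rV[R]_k -> 'M[R]_p) : ctm A -> ctm (fun y => \adj (A y)).
Proof.
move=> hA i j.
apply: (cts_ext (g := fun y => (-1) ^+ (j + i) * \det (row' j (col' i (A y))))) => [y|].
  by rewrite mxE.
apply: cts_mul; first exact: cts_cst.
apply: cts_det.
have -> : (fun y => row' j (col' i (A y))) = (fun y => mxsub (lift j) (lift i) (A y)).
  by apply/funext => y; apply/matrixP => a b; rewrite !mxE.
exact: ctm_mxsub.
Qed.

End Cont.

Lemma mx_cvgP (R : realType) (T : Type) (F : set_system T) (FF: Filter F) m n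
  (f : T -> 'M[R]_(m,n)) (M : 'M[R]_(m,n)) :
  (forall i j, (fun y => f y i j) @ F --> M i j) -> f @ F --> M.
Proof.
move=> H A [P PM sPA].
have : \forall y \near F, forall i j, P i j (f y i j).
  apply: filter_forall => i; apply: filter_forall => j.
  exact: (H i j _ (PM i j)).
by apply: filterS => y Hy; apply: sPA.
Qed.

Section Misc.
Variable R : realType.

Lemma pair_cvg k n (x : 'rV[R]_k) (f g : 'rV[R]_k -> 'rV[R]_n) :
  f @ x --> f x -> g @ x --> g x -> (fun y => (f y, g y)) @ x --> (f x, g x).
Proof. move=> hf hg. exact: (@cvg_pair _ _ _ (nbhs x) (nbhs (f x)) (nbhs (g x)) _ _ _ _ _ hf hg). Qed.

Lemma fst_cvg k n (x : 'rV[R]_k) (T : 'rV[R]_k -> 'rV[R]_n * 'rV[R]_n) j :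
  T @ x --> T x -> (fun y => (T y).1 0 j) @ x --> (T x).1 0 j.
Proof.
move=> hT.
apply: (@cvg_comp _ _ _ T (fun p => p.1 0 j) (nbhs x) (nbhs (T x)) _ hT).
apply: (@cvg_comp _ _ _ fst (fun M : 'rV[R]_n => M 0 j) (nbhs (T x)) (nbhs (T x).1)).
  exact: cvg_fst.
exact: coord_continuous.
Qed.

Lemma snd_cvg k n (x : 'rV[R]_k) (T : 'rV[R]_k -> 'rV[R]_n * 'rV[R]_n) j :
  T @ x --> T x -> (fun y => (T y).2 0 j) @ x --> (T x).2 0 j.
Proof.
move=> hT.
apply: (@cvg_comp _ _ _ T (fun p => p.2 0 j) (nbhs x) (nbhs (T x)) _ hT).
apply: (@cvg_comp _ _ _ snd (fun M : 'rV[R]_n => M 0 j) (nbhs (T x)) (nbhs (T x).2)).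
  exact: cvg_snd.
exact: coord_continuous.
Qed.

Lemma coord_cvg k p q (x : 'rV[R]_k) (E : 'rV[R]_k -> 'M[R]_(p,q)) i j :
  E @ x --> E x -> (fun y => E y i j) @ x --> E x i j.
Proof.
move=> hE.
apply: (@cvg_comp _ _ _ E (fun M => M i j) (nbhs x) (nbhs (E x)) _ hE).
exact: coord_continuous.
Qed.

Lemma open_cvg k (V : topologicalType) (U : set 'rV[R]_k) (f : 'rV[R]_k -> V) :
  open U -> {within U, continuous f} -> forall y, U y -> f @ y --> f y.
Proof.
move=> oU; rewrite continuous_open_subspace // => h y Uy; apply: h.
by rewrite inE.
Qed.

Lemma cts_neq0 k (x : 'rV[R]_k) g : cts x g -> g x != 0 -> nbhs x [set y | g y != 0].
Proof.
move=> hg hx; apply: (hg [set r | r != 0]).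
by have := @open_neq R 0; rewrite openE; apply.
Qed.

End Misc.

Unset Implicit Arguments.

Theorem propositionA2 (R : realType) (k l n : nat) (U : set 'rV[R]_k)
    (D : 'rV[R]_k -> set ('rV[R]_n * 'rV[R]_n)) (E : 'rV[R]_k -> 'M[R]_(l, n)) :
  open U ->
  modulated_dirac U D ->
  {within U, continuous E} ->
  (exists d : nat, forall x, U x ->
     has_dim (D x `&` [set p | in_kerE (E x) p.2]) d) ->
  modulated_dirac U (reduced_dirac D E).
Proof.
move=> oU HD cE [d Hd] x0 Ux0.
have [dir0 [Ux [nUx sUx [T [Tbij Tc]]]]] := HD x0 Ux0.
pose F y := rep1 (T y). pose G y := rep2 (T y). pose N y := G y *m (E y)^T.
have TF : forall y, Ux y -> forall z, T y z = (z *m F y, z *m G y).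
  by move=> y Uy; apply: lin_rep; case: (Tbij y Uy).
have HDy : forall y, Ux y -> forall p, D y p <-> exists z, p = (z *m F y, z *m G y).
  move=> y Uy p; have [_ [_ on]] := Tbij y Uy; rewrite on.
  by split => -[z hz]; exists z; rewrite -?hz TF.
have diry : forall y, Ux y -> Defs.dirac (D y).
  by move=> y Uy; exact: (HD y (sUx y Uy)).1.
have injy : forall y : 'rV[R]_k, Ux y -> forall z z' : 'rV[R]_n,
    (z *m F y, z *m G y) = (z' *m F y, z' *m G y) -> z = z'.
  by move=> y Uy z z'; rewrite -!(TF y Uy); exact: (Tbij y Uy).2.1.
have rkN : forall y, Ux y -> \rank (N y) = (n - d)%N.
  move=> y Uy; apply: (dim_rank (injy y Uy) _ (Hd y (sUx y Uy))).
  move=> p; split.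
    case=> /(HDy y Uy) [z ->] /= hk; exists z; split => //.
    by rewrite mulmxA; apply: trmx_inj; rewrite trmx_mul trmxK hk trmx0.
  case=> z [-> hz]; split; first by apply/(HDy y Uy); exists z.
  by rewrite /in_kerE /= -[E y]trmxK -trmx_mul -mulmxA hz trmx0.
have Ux0' : Ux x0 := nbhs_singleton nUx.
have [f [g dA0]] := minor (erefl (\rank (N x0))).
pose Z y := Zmx (N y) f g.
pose A y := mxsub f g (N y).
have Zok : forall y, Ux y -> \det (A y) != 0 ->
    Z y *m N y = 0 /\ forall p (X : 'M[R]_(p,n)), X *m N y = 0 -> exists W, X = W *m Z y.
  move=> y Uy dA; split.
    by apply: ZN => //; rewrite rkN // -(rkN x0 Ux0').
  by move=> p X XN; exists ((\det (A y))^-1 *: X); exact: Zspan.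
pose Bf' y := Bf (F y) (E y) (Z y). pose Be' y := Be l (G y) (Z y).
have [ZN0 Zs0] := Zok x0 Ux0' dA0.
have rk0 : \rank (row_mx (Bf' x0) (Be' x0)) = n.
  exact: (B_rank (HDy x0 Ux0') (diry x0 Ux0') ZN0 Zs0).
have [h [c dB0]] := minor rk0.
have cT : forall z y, Ux° y -> (fun y => T y z) @ y --> T y z.
  move=> z; apply: open_cvg; first exact: open_interior.
  exact: (continuous_subspaceW (@interior_subset _ Ux) (Tc z)).
have cEy : forall y, U y -> E @ y --> E y := open_cvg oU cE.
have cAll : forall y, Ux° y ->
    [/\ ctm y Bf', ctm y Be' & cts y (fun y => \det (A y))].
  move=> y Iy.
  have Uy : U y by apply: sUx; exact: interior_subset.
  have cF : ctm y F.
    move=> i j; apply: (cts_ext (g := fun y => (T y (delta_mx 0 i)).1 0 j)) => [w|].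
      by rewrite mxE.
    exact: fst_cvg (cT _ _ Iy).
  have cG : ctm y G.
    move=> i j; apply: (cts_ext (g := fun y => (T y (delta_mx 0 i)).2 0 j)) => [w|].
      by rewrite mxE.
    exact: snd_cvg (cT _ _ Iy).
  have cE' : ctm y E by move=> i j; apply: coord_cvg; exact: cEy.
  have cN : ctm y N by apply: ctm_mul => //; exact: ctm_tr.
  have cA : ctm y A by exact: ctm_mxsub.
  have cdA : cts y (fun y => \det (A y)) by exact: cts_det.
  have cZ : ctm y Z.
    rewrite /Z /Zmx; apply: ctm_add; first by apply: ctm_scale => //; exact: ctm_cst.
    apply: ctm_opp; apply: ctm_mul; last exact: ctm_cst.
    by apply: ctm_mul; [exact: ctm_mxsub | exact: ctm_adj].
  split => //.
    by apply: ctm_col_mx => //; exact: ctm_mul.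
  by apply: ctm_col_mx; [exact: ctm_mul | exact: ctm_cst].
pose V := (Ux° `&` [set y | \det (A y) != 0] `&`
   [set y | \det (mxsub h c (row_mx (Bf' y) (Be' y))) != 0])°.
have Ix0 : Ux° x0 by exact: nUx.
have [cBf0 cBe0 cdA0] := cAll x0 Ix0.
have nV : nbhs x0 V.
  apply: nbhs_interior; apply: filterI; first apply: filterI.
  - exact: nbhs_interior.
  - exact: cts_neq0.
  - apply: (cts_neq0 (g := fun y => \det (mxsub h c (row_mx (Bf' y) (Be' y))))) => //.
    apply: cts_det; apply: ctm_mxsub; exact: ctm_row_mx.
have Vprop : forall y, V y -> [/\ Ux° y, Ux y, \det (A y) != 0 &
    \det (mxsub h c (row_mx (Bf' y) (Be' y))) != 0].
  move=> y /interior_subset [[Iy dA] dB]; split => //; exact: interior_subset.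
split.
  exact: (Dt_dirac (HDy x0 Ux0') (diry x0 Ux0') ZN0 Zs0).
exists V; split => //.
  by move=> y /Vprop [_ Uy _ _]; exact: sUx.
exists (fun y (z : 'rV[R]_n) => (z *m rowsub h (Bf' y), z *m rowsub h (Be' y))).
split.
  move=> y /Vprop [_ Uy dA dB]; have [ZNy Zsy] := Zok y Uy dA.
  apply: sel_bij dB.
    exact: (Dt_eq (HDy y Uy) ZNy Zsy).
  exact: (B_iso (HDy y Uy) (diry y Uy) ZNy).
move=> z; rewrite continuous_open_subspace; last exact: open_interior.
move=> y; rewrite inE => /Vprop [Iy _ _ _].
have [cBf cBe _] := cAll y Iy.
have c1 : ctm y (fun y => z *m rowsub h (Bf' y)).
  by apply: ctm_mul; [exact: ctm_cst | exact: ctm_mxsub].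
have c2 : ctm y (fun y => z *m rowsub h (Be' y)).
  by apply: ctm_mul; [exact: ctm_cst | exact: ctm_mxsub].
apply: pair_cvg; apply: (@mx_cvgP R _ (nbhs y) (nbhs_filter y)) => i j.
  exact: c1.
exact: c2.
Qed.
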